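(* Let $k$ be a positive integer and $c > 0$. In any election, a committee $S$ of size $k$ is $c$-stable if and only if it is $\frac{c}{k}$-undominated.
   Context: An election consists of a finite set $V$ of $n$ voters, a finite set $C$ of candidates, and for each voter $v$ a strict linear order $\succ_v$ on $C$. A committee is a nonempty subset $S \subseteq C$. Voter $v$ strongly prefers committee $S'$ over committee $S$ (written $S' \succ_v S$) if $v$ prefers her favorite candidate in $S'$ over her favorite candidate in $S$; for a single candidate $a$, $a \succ_v S$ means $\{a\} \succ_v S$, i.e., $v$ prefers $a$ to every member of $S$. A committee $S$ of size $k$ is $c$-stable if for every committee $S'$ of size $k'$, the fraction of voters $v$ with $S' \succ_v S$ is less than $c \cdot \frac{k'}{k}$. A committee $S$ is $\alpha$-undominated if for every candidate $a \in C$, the fraction of voters $v$ with $a \succ_v S$ is less than $\alpha$. *)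

(* Defs.v *)
From HB Require Import structures.
From mathcomp Require Import all_boot all_order all_algebra.
Set Implicit Arguments. Unset Strict Implicit. Unset Printing Implicit Defensive.
Import Order.TTheory GRing.Theory Num.Theory.
Local Open Scope ring_scope.

(* A strict linear order on C given as a boolean relation: [r a b] means a is
   strictly preferred to b. *)
Definition strict_linear_order (C : finType) (r : rel C) : Prop :=
  [/\ (forall a, ~~ r a a),
      (forall a b d, r a b -> r b d -> r a d) &
      (forall a b, a != b -> r a b || r b a)].

Section Election.
Variables (V C : finType) (pref : V -> rel C).

Definition favorite (v : V) (S : {set C}) (a : C) : bool :=
  (a \in S) && [forall b in S, (b != a) ==> pref v a b].

Definition strongly_prefers (v : V) (S' S : {set C}) : bool :=
  [exists a', exists a, [&& favorite v S' a', favorite v S a & pref v a' a]].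

Definition frac_prefer (R : realFieldType) (S' S : {set C}) : R :=
  #|[set v | strongly_prefers v S' S ]|%:R / #|V|%:R.

Definition committee (S : {set C}) : Prop := S != set0.

Definition c_stable (R : realFieldType) (c : R) (S : {set C}) : Prop :=
  forall S' : {set C}, committee S' ->
    frac_prefer R S' S < c * (#|S'|%:R / #|S|%:R).

Definition undominated (R : realFieldType) (alpha : R) (S : {set C}) : Prop :=
  forall a : C, frac_prefer R [set a] S < alpha.
End Election.

(* Main.v *)
Require Import Defs.
From HB Require Import structures.
From mathcomp Require Import all_boot all_order all_algebra.
Import Order.TTheory GRing.Theory Num.Theory.
Local Open Scope ring_scope.

Lemma cardU_le (I T : finType) (P : {pred I}) (F : I -> {set T}) :
  (#|\bigcup_(i in P) F i| <= \sum_(i in P) #|F i|)%N.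
Proof.
elim/big_rec2: _ => [|i n U _ IH]; first by rewrite cards0.
by rewrite (leq_trans (leq_card_setU _ _)) // leq_add2l.
Qed.

Theorem proposition1 (R : realFieldType) (V C : finType) (pref : V -> rel C)
  (Hpref : forall v, strict_linear_order (pref v))
  (k : nat) (c : R) (S : {set C}) :
  (0 < k)%N -> 0 < c -> committee S -> #|S| = k ->
  (c_stable pref c S <-> undominated pref (c / k%:R) S).
Proof.
move=> k0 c0 _ Sk; split.
  move=> H a; have := H [set a]; rewrite cards1 Sk mul1r; apply.
  by apply/set0Pn; exists a; rewrite inE.
move=> H S' /set0Pn [a0 a0S']; rewrite Sk.
have sub : [set v | strongly_prefers pref v S' S] \subset
    \bigcup_(a in S') [set v | strongly_prefers pref v [set a] S].
  apply/subsetP => v; rewrite inE => /existsP [a' /existsP [a /and3P [fa' fa pa]]].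
  apply/bigcupP; exists a'; first by case/andP: fa'.
  rewrite inE; apply/existsP; exists a'; apply/existsP; exists a.
  rewrite fa pa /favorite in_set1 eqxx /= andbT.
  by apply/forall_inP => b; rewrite in_set1 => /eqP ->; rewrite eqxx.
have le1 := leq_trans (subset_leq_card sub) (cardU_le _ _ _ _).
apply: (le_lt_trans (y := \sum_(a in S') frac_prefer pref R [set a] S)).
  rewrite /frac_prefer -mulr_suml ler_wpM2r ?invr_ge0 ?ler0n //.
  by rewrite -natr_sum ler_nat.
apply: (lt_le_trans (ltr_sum (G := fun _ => c / k%:R) _ (fun a _ => H a))).
  by apply/hasP; exists a0 => //; rewrite mem_index_enum.
by rewrite sumr_const -[_ *+ #|S'|]mulr_natr -mulrA (mulrC k%:R^-1).
Qed.
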